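(* Let $f:[0,\infty)\to[0,\infty)$ be continuously differentiable with $f>0$ on $[t_0,\infty)$ for some $t_0\ge0$ and $f\in C^2([t_0,\infty))$, let $g=\log f$ on $[t_0,\infty)$, and assume condition (H1) of the context. Then $g$ and $g'$ are strictly increasing on $[t_0,\infty)$, $g(t)\to\infty$ and $g'(t)\to\infty$ as $t\to\infty$, and $$\lim_{t\to\infty}\frac{\log g'(t)}{g(t)}=0.$$
   Context: Condition (H1): (i) $g'(t)>0$ and $g''(t)>0$ for all $t\ge t_0$, and there is a pair $(q,p)$ with either $q=1$ and $p\in(0,\infty]$, or $q\in(1,\infty)$ and $p\in(0,\infty)$, such that $\lim_{t\to\infty}\frac{g'(t)^2}{g(t)g''(t)}=q$ and $\lim_{t\to\infty}\frac{tg'(t)}{g(t)}=p$; (ii) if $q=1$, then $tg'(t)/g(t)$ is nondecreasing on $[t_0,\infty)$ and there exist $k\in\mathbb{N}$ and $\hat g\in C^2([t_0,\infty))$ with $f=\exp_k\circ\hat g$ and $\hat g'/\hat g$ nonincreasing on $[t_0,\infty)$ ($\exp_1=\exp$, $\exp_k=\exp_{k-1}\circ\exp$). *)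

(* Defs.v *)
From Stdlib Require Import Reals.
From Coquelicot Require Import Coquelicot.
Open Scope R_scope.

Fixpoint exp_iter (k : nat) (x : R) : R :=
  match k with
  | O => x
  | S k' => exp (exp_iter k' x)
  end.

Definition cont_within_ge (a : R) (h : R -> R) (t : R) : Prop :=
  filterlim h (within (fun x => a <= x) (locally t)) (locally (h t)).

Definition C1_on_ge (a : R) (h : R -> R) : Prop :=
  forall t, a <= t -> ex_derive h t /\ cont_within_ge a (Derive h) t.

Definition C2_on_ge (a : R) (h : R -> R) : Prop :=
  forall t, a <= t ->
    ex_derive h t /\ ex_derive (Derive h) t /\
    cont_within_ge a (Derive (Derive h)) t.

Definition H1 (f g : R -> R) (t0 : R) : Prop :=
  (forall t, t0 <= t -> 0 < Derive g t /\ 0 < Derive (Derive g) t) /\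
  exists (q : R) (p : Rbar),
    ((q = 1 /\ Rbar_lt (Finite 0) p) \/
     (1 < q /\ exists p' : R, p = Finite p' /\ 0 < p')) /\
    is_lim (fun t => (Derive g t) ^ 2 / (g t * Derive (Derive g) t))
           p_infty (Finite q) /\
    is_lim (fun t => t * Derive g t / g t) p_infty p /\
    (q = 1 ->
       (forall s t, t0 <= s -> s <= t -> s * Derive g s / g s <= t * Derive g t / g t) /\
       exists (k : nat) (gh : R -> R),
         (1 <= k)%nat /\ C2_on_ge t0 gh /\
         (forall t, t0 <= t -> f t = exp_iter k (gh t)) /\
         (forall s t, t0 <= s -> s <= t ->
            Derive gh t / gh t <= Derive gh s / gh s)).

(* Main.v *)
Require Import Defs.
From Stdlib Require Import Reals Lra.
From Coquelicot Require Import Coquelicot.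
Open Scope R_scope.

Lemma mono_strict (h dh : R -> R) (a b : R) : a < b ->
  (forall x, a < x < b -> is_derive h x (dh x)) ->
  (forall x, a <= x <= b -> 0 < dh x) ->
  (forall x, a <= x <= b -> continuity_pt h x) -> h a < h b.
Proof.
  intros Hab Hd Hp Hc.
  destruct (MVT_gen h a b dh) as [c [Hc1 Hc2]].
  - rewrite Rmin_left, Rmax_right by lra. intros x Hx; apply Hd; auto.
  - rewrite Rmin_left, Rmax_right by lra. intros x Hx; apply Hc; auto.
  - rewrite Rmin_left, Rmax_right in Hc1 by lra.
    assert (0 < dh c * (b - a)) by (apply Rmult_lt_0_compat; [apply Hp; auto| lra]).
    lra.
Qed.

Lemma mono_weak (h dh : R -> R) (a b : R) : a <= b ->
  (forall x, a <= x <= b -> is_derive h x (dh x)) ->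
  (forall x, a <= x <= b -> 0 <= dh x) -> h a <= h b.
Proof.
  intros Hab Hd Hp.
  destruct (Req_dec a b) as [->|Hne]; [lra|].
  destruct (MVT_gen h a b dh) as [c [Hc1 Hc2]].
  - rewrite Rmin_left, Rmax_right by lra. intros x Hx; apply Hd; lra.
  - rewrite Rmin_left, Rmax_right by lra. intros x Hx.
    apply continuity_pt_filterlim. apply (ex_derive_continuous (K:=R_AbsRing) (V:=R_NormedModule)). eexists; apply Hd; auto.
  - rewrite Rmin_left, Rmax_right in Hc1 by lra.
    assert (0 <= dh c * (b - a)) by (apply Rmult_le_pos; [apply Hp; auto| lra]).
    lra.
Qed.

Lemma alg_bounds (a b G q : R) : 0 < a -> 0 < b -> 0 < G -> 1 <= q ->
  Rabs (a ^ 2 / (G * b) - q) < 1/2 ->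
  b / a <= 2 * (a / G) /\ a / G <= 2 * q * (b / a).
Proof.
  intros Ha Hb HG Hq Hr.
  set (r := a ^ 2 / (G * b)) in *.
  assert (E : a / G = r * (b / a)) by (unfold r; field; lra).
  assert (Hu : 0 < b / a) by (unfold Rdiv; apply Rmult_lt_0_compat; [lra|apply Rinv_0_lt_compat; lra]).
  apply Rabs_def2 in Hr. rewrite E. split; nra.
Qed.

Lemma is_derive_ln_comp (h : R -> R) x d : is_derive h x d -> 0 < h x ->
  is_derive (fun y => ln (h y)) x (d / h x).
Proof.
  intros Hd Hp.
  replace (d / h x) with (scal d (/ h x)).
  2:{ unfold scal; simpl; unfold mult; simpl; unfold Rdiv; ring. }
  apply (is_derive_comp (K:=R_AbsRing) (V:=R_NormedModule) ln h); [apply is_derive_ln; auto| auto].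
Qed.

Theorem lemma2p1 (f : R -> R) (t0 : R) :
  0 <= t0 ->
  (forall t, 0 <= t -> 0 <= f t) ->
  C1_on_ge 0 f ->
  (forall t, t0 <= t -> 0 < f t) ->
  C2_on_ge t0 f ->
  H1 f (fun t => ln (f t)) t0 ->
  let g := fun t => ln (f t) in
  (forall s t, t0 <= s -> s < t -> g s < g t) /\
  (forall s t, t0 <= s -> s < t -> Derive g s < Derive g t) /\
  is_lim g p_infty p_infty /\
  is_lim (Derive g) p_infty p_infty /\
  is_lim (fun t => ln (Derive g t) / g t) p_infty (Finite 0).
Proof.
  intros Ht0 Hf0 C1 Hpos C2 [Hi [q [p [Hqp [Hr [Hp Hii]]]]]] g.
  clear Hp Hii.
  assert (Hq : 1 <= q) by (destruct Hqp as [[-> _]|[? _]]; lra).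
  clear Hqp.
  set (K := fun x => Derive f x / f x).
  assert (Hdg : forall x, t0 <= x -> is_derive g x (K x)).
  { intros x Hx. unfold g, K.
    destruct (C1 x ltac:(lra)) as [[d Hd] _].
    rewrite (is_derive_unique _ _ _ Hd).
    specialize (Hpos x Hx).
    apply (is_derive_ext (fun y => ln (f y))); [reflexivity|].
    replace (d / f x) with (scal d (/ f x)).
    2:{ unfold scal; simpl; unfold mult; simpl; unfold Rdiv; ring. }
    apply (is_derive_comp (K:=R_AbsRing) (V:=R_NormedModule) ln f); [apply is_derive_ln; auto| auto]. }
  change (fun t0 : R => ln (f t0)) with g in Hi, Hr.
  assert (HK : forall x, t0 <= x -> Derive g x = K x).
  { intros x Hx; apply is_derive_unique; auto. }
  assert (HexK : forall x, t0 <= x -> ex_derive K x).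
  { intros x Hx. unfold K. apply ex_derive_div.
    - apply (C2 x Hx).
    - apply (C1 x ltac:(lra)).
    - specialize (Hpos x Hx); lra. }
  assert (HKd : forall x, t0 < x -> is_derive K x (Derive (Derive g) x)).
  { intros x Hx.
    replace (Derive (Derive g) x) with (Derive K x).
    - apply Derive_correct, HexK; lra.
    - apply Derive_ext_loc.
      apply (locally_interval _ x t0 p_infty); simpl; auto.
      intros y Hy _. symmetry; apply HK; lra. }
  assert (HKc : forall x, t0 <= x -> continuity_pt K x).
  { intros x Hx. apply continuity_pt_filterlim.
    apply (ex_derive_continuous (K:=R_AbsRing) (V:=R_NormedModule)). auto. }
  assert (Hgc : forall x, t0 <= x -> continuity_pt g x).
  { intros x Hx. apply continuity_pt_filterlim.
    apply (ex_derive_continuous (K:=R_AbsRing) (V:=R_NormedModule)). eexists; apply Hdg; auto. }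
  assert (Claim1 : forall s t, t0 <= s -> s < t -> g s < g t).
  { intros s t Hs Hst. apply (mono_strict g (Derive g)); auto.
    - intros x Hx. rewrite HK by lra. apply Hdg; lra.
    - intros x Hx. apply Hi; lra.
    - intros x Hx. apply Hgc; lra. }
  assert (Claim2 : forall s t, t0 <= s -> s < t -> Derive g s < Derive g t).
  { intros s t Hs Hst. rewrite !HK by lra. apply (mono_strict K (Derive (Derive g))); auto.
    - intros x Hx. apply HKd; lra.
    - intros x Hx. apply Hi; lra.
    - intros x Hx. apply HKc; lra. }
  set (c0 := Derive g t0).
  assert (Hc0 : 0 < c0) by (apply Hi; lra).
  assert (Hgc0 : forall x, t0 <= x -> c0 <= Derive g x).
  { intros x Hx. destruct (Req_dec x t0) as [->|]; [right; reflexivity|]. left; apply Claim2; lra. }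
  assert (Hlin : forall x, t0 <= x -> g t0 + c0 * (x - t0) <= g x).
  { intros x Hx.
    assert (g t0 - c0 * t0 <= g x - c0 * x); [|lra].
    apply (mono_weak (fun y => g y - c0 * y) (fun y => Derive g y - c0 * 1)); auto.
    - intros y Hy. apply (is_derive_minus (K:=R_AbsRing) (V:=R_NormedModule)).
      + rewrite HK by lra. apply Hdg; lra.
      + apply is_derive_scal. apply (is_derive_id (K:=R_AbsRing)).
    - intros y Hy. specialize (Hgc0 y ltac:(lra)). lra. }
  assert (Claim3 : is_lim g p_infty p_infty).
  { apply is_lim_spec. intros M. exists (t0 + Rabs (M - g t0) / c0). intros y Hy.
    assert (Hy1 : 0 <= Rabs (M - g t0) / c0).
    { apply Rmult_le_pos; [apply Rabs_pos | left; apply Rinv_0_lt_compat; auto]. }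
    assert (c0 * (Rabs (M - g t0) / c0) < c0 * (y - t0)) by (apply Rmult_lt_compat_l; lra).
    replace (c0 * (Rabs (M - g t0) / c0)) with (Rabs (M - g t0)) in H by (field; lra).
    pose proof (Rle_abs (M - g t0)). pose proof (Hlin y ltac:(lra)). lra. }
  apply is_lim_spec in Hr.
  destruct (Hr (mkposreal (1/2) ltac:(lra))) as [T1 HT1]. simpl in HT1.
  pose proof Claim3 as C3. apply is_lim_spec in C3.
  destruct (C3 1) as [T2 HT2]. simpl in HT2.
  set (T := Rmax (t0 + 1) (Rmax T1 T2) + 1).
  assert (HT : forall x, T <= x -> t0 < x /\ T1 < x /\ T2 < x).
  { intros x Hx. unfold T in Hx.
    pose proof (Rmax_l (t0+1) (Rmax T1 T2)). pose proof (Rmax_r (t0+1) (Rmax T1 T2)).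
    pose proof (Rmax_l T1 T2). pose proof (Rmax_r T1 T2). lra. }
  assert (Hab : forall x, T <= x ->
     Derive (Derive g) x / K x <= 2 * (K x / g x) /\ K x / g x <= 2 * q * (Derive (Derive g) x / K x)).
  { intros x Hx. destruct (HT x Hx) as [H1x [H2x H3x]].
    rewrite <- HK by lra. apply alg_bounds; auto; try (apply Hi; lra).
    - specialize (HT2 x H3x); lra.
    - apply HT1; auto. }
  assert (HdL : forall x, T <= x -> is_derive (fun y => ln (K y)) x (Derive (Derive g) x / K x)).
  { intros x Hx. destruct (HT x Hx) as [H1x _]. apply is_derive_ln_comp; auto.
    rewrite <- HK by lra. apply Hi; lra. }
  assert (HdG : forall x, T <= x -> is_derive (fun y => ln (g y)) x (K x / g x)).
  { intros x Hx. destruct (HT x Hx) as [H1x [_ H3x]]. apply is_derive_ln_comp; [apply Hdg; lra|].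
    specialize (HT2 x H3x); lra. }
  assert (Up : forall x, T <= x -> ln (K x) <= ln (K T) - 2 * ln (g T) + 2 * ln (g x)).
  { intros x Hx.
    assert (2 * ln (g T) - ln (K T) <= 2 * ln (g x) - ln (K x)); [|lra].
    apply (mono_weak (fun y => 2 * ln (g y) - ln (K y))
             (fun y => 2 * (K y / g y) - Derive (Derive g) y / K y)); auto.
    - intros y Hy. apply (is_derive_minus (K:=R_AbsRing) (V:=R_NormedModule)).
      + apply is_derive_scal. apply HdG; lra.
      + apply HdL; lra.
    - intros y Hy. destruct (Hab y ltac:(lra)). lra. }
  assert (Lo : forall x, T <= x -> 2 * q * ln (K T) - ln (g T) <= 2 * q * ln (K x) - ln (g x)).
  { intros x Hx.
    apply (mono_weak (fun y => 2 * q * ln (K y) - ln (g y))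
             (fun y => 2 * q * (Derive (Derive g) y / K y) - K y / g y)); auto.
    - intros y Hy. apply (is_derive_minus (K:=R_AbsRing) (V:=R_NormedModule)).
      + apply is_derive_scal. apply HdL; lra.
      + apply HdG; lra.
    - intros y Hy. destruct (Hab y ltac:(lra)). lra. }
  assert (HlnG : is_lim (fun y => ln (g y)) p_infty p_infty).
  { apply (is_lim_comp (fun y => ln y) g p_infty p_infty p_infty is_lim_ln_p Claim3).
    exists 0. intros; discriminate. }
  assert (Claim4 : is_lim (Derive g) p_infty p_infty).
  { apply is_lim_spec. intros M. simpl. set (M' := Rmax M 1).
    assert (HM' : 0 < M') by (unfold M'; pose proof (Rmax_r M 1); lra).
    apply is_lim_spec in HlnG.
    destruct (HlnG (2*q*ln M' - (2*q*ln(K T) - ln(g T)))) as [T3 HT3]. simpl in HT3.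
    exists (Rmax T T3). intros y Hy.
    pose proof (Rmax_l T T3). pose proof (Rmax_r T T3).
    pose proof (Lo y ltac:(lra)). specialize (HT3 y ltac:(lra)).
    assert (Hlt : ln M' < ln (K y)).
    { apply (Rmult_lt_reg_l (2*q)); lra. }
    destruct (HT y ltac:(lra)) as [H1y _].
    assert (0 < K y) by (rewrite <- HK by lra; apply Hi; lra).
    apply ln_lt_inv in Hlt; auto.
    rewrite HK by lra. pose proof (Rmax_l M 1). unfold M' in *. lra. }
  assert (Hinv : is_lim (fun y => / g y) p_infty 0).
  { apply (is_lim_inv g p_infty p_infty Claim3). discriminate. }
  assert (Hlg : is_lim (fun y => ln (g y) / g y) p_infty 0).
  { apply (is_lim_comp (fun y => ln y / y) g p_infty 0 p_infty is_lim_div_ln_p Claim3).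
    exists 0. intros; discriminate. }
  split; [auto|]. split; [auto|]. split; [auto|]. split; [auto|].
  set (Cb := ln (K T) - 2 * ln (g T)).
  apply (is_lim_le_le_loc (fun y => ln c0 * / g y) (fun y => Cb * / g y + 2 * (ln (g y) / g y))).
  - exists T. intros y Hy. destruct (HT y ltac:(lra)) as [H1y [_ H3y]].
    specialize (HT2 y H3y). pose proof (Up y ltac:(lra)).
    assert (Hgi : 0 < / g y) by (apply Rinv_0_lt_compat; lra).
    rewrite HK by lra. unfold Rdiv. split.
    + apply Rmult_le_compat_r; [lra|]. apply ln_le; auto. rewrite <- HK by lra. apply Hgc0; lra.
    + replace (Cb * / g y + 2 * (ln (g y) * / g y)) with ((Cb + 2 * ln (g y)) * / g y) by ring.
      apply Rmult_le_compat_r; [lra|]. unfold Cb. lra.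
  - replace (Finite 0) with (Rbar_mult (ln c0) 0) by (simpl; f_equal; ring).
    apply is_lim_scal_l; auto.
  - replace (Finite 0) with (Finite (Cb * 0 + 2 * 0)) by (f_equal; ring).
    apply is_lim_plus'.
    + apply (is_lim_scal_l _ Cb p_infty 0); auto.
    + apply (is_lim_scal_l _ 2 p_infty 0); auto.
Qed.
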